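(* Let $C_k(T)=T-\sin(Tk)/\sin k$. Fix $\alpha\in\{1/3,1/7\}$, and for $T\in\mathbb N^+$ let $k_1<k_2<\dots<k_T$ be the $T$ solutions in $(0,\pi)$ of $-\alpha\tan(k/2)=\tan(Tk)$. There exists $T_0\in\mathbb N^+$ such that for all $T>T_0$: (1) $C_{k_t}(T)/C_{k_t}(2T)\le5/6$ for $t=2,3,\dots,T-1$; (2) $C_{k_1}(T)/C_{k_1}(2T)^2\le1/96$ and $C_{k_T}(T)/C_{k_T}(2T)^2\le1/96$. *)

(* Defs.v *)
From Stdlib Require Import Reals Lra Lia.
Open Scope R_scope.

Definition Cfun (k : R) (T : nat) : R := INR T - sin (INR T * k) / sin k.

(* k is a solution in (0, pi) of  -alpha tan(k/2) = tan(T k).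
   We require cos (T k) <> 0 so that tan (T k) is genuinely defined
   (Stdlib's tan is total with x/0 = 0). *)
Definition is_sol (alpha : R) (T : nat) (k : R) : Prop :=
  0 < k < PI /\ cos (INR T * k) <> 0 /\ - alpha * tan (k / 2) = tan (INR T * k).

Definition sol_enum (alpha : R) (T : nat) (ks : nat -> R) : Prop :=
  (forall t, (1 <= t < T)%nat -> ks t < ks (S t)) /\
  (forall t, (1 <= t <= T)%nat -> is_sol alpha T (ks t)) /\
  (forall k, is_sol alpha T k -> exists t, (1 <= t <= T)%nat /\ ks t = k).

(* Main.v *)
Require Import Defs.
From Stdlib Require Import Reals.
From Stdlib Require Import Lra Lia Psatz.
Open Scope R_scope.

Lemma sin_lb_eq a : sin_lb a = a - a^3/6 + a^5/120 - a^7/5040.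
Proof. unfold sin_lb, sin_approx, sin_term. simpl. field. Qed.

Lemma sin_mult_bound n x : Rabs (sin (INR n * x)) <= INR n * Rabs (sin x).
Proof.
  induction n as [|n IH].
  - simpl. rewrite Rmult_0_l, sin_0, Rabs_R0. lra.
  - rewrite S_INR. replace ((INR n + 1) * x) with (INR n * x + x) by ring.
    rewrite sin_plus.
    eapply Rle_trans; [apply Rabs_triang|]. rewrite !Rabs_mult.
    assert (Rabs (cos x) <= 1) by (apply Rabs_le; apply COS_bound).
    assert (Rabs (cos (INR n * x)) <= 1) by (apply Rabs_le; apply COS_bound).
    pose proof (Rabs_pos (sin (INR n * x))). pose proof (Rabs_pos (sin x)).
    nra.
Qed.

Lemma tan_lt a b : a < b -> b - a < PI -> cos a * cos b > 0 -> tan a < tan b.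
Proof.
  intros H1 H2 H3.
  assert (ca : cos a <> 0) by (intro E; rewrite E in H3; lra).
  assert (cb : cos b <> 0) by (intro E; rewrite E in H3; lra).
  assert (E : tan b - tan a = sin (b - a) / (cos a * cos b)).
  { unfold tan. rewrite sin_minus. field. split; auto. }
  assert (0 < sin (b - a)) by (apply sin_gt_0; lra).
  assert (0 < sin (b - a) / (cos a * cos b)) by (apply Rdiv_lt_0_compat; lra).
  lra.
Qed.

Lemma sincos_mPI m : sin (INR m * PI) = 0 /\ cos (INR m * PI) ^ 2 = 1.
Proof.
  induction m as [|m [IH1 IH2]].
  - simpl. rewrite Rmult_0_l, sin_0, cos_0. split; ring.
  - rewrite S_INR. replace ((INR m + 1) * PI) with (INR m * PI + PI) by ring.
    rewrite sin_plus, cos_plus, sin_PI, cos_PI, IH1. split; [ring|].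
    replace ((cos (INR m * PI) * -1 - 0 * 0) ^ 2) with (cos (INR m * PI) ^ 2) by ring.
    auto.
Qed.

Lemma sin_same_sign m a b :
  INR m * PI < a < (INR m + 1) * PI -> INR m * PI < b < (INR m + 1) * PI ->
  sin a * sin b > 0.
Proof.
  intros Ha Hb. destruct (sincos_mPI m) as [S C].
  replace a with ((a - INR m * PI) + INR m * PI) by ring.
  replace b with ((b - INR m * PI) + INR m * PI) by ring.
  rewrite !sin_plus, S.
  assert (0 < sin (a - INR m * PI)) by (apply sin_gt_0; lra).
  assert (0 < sin (b - INR m * PI)) by (apply sin_gt_0; lra).
  replace ((sin (a - INR m * PI) * cos (INR m * PI) + cos (a - INR m * PI) * 0) *
    (sin (b - INR m * PI) * cos (INR m * PI) + cos (b - INR m * PI) * 0))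
    with (sin (a - INR m * PI) * sin (b - INR m * PI) * cos (INR m * PI) ^ 2) by ring.
  rewrite C. nra.
Qed.

Lemma tan_half_pos k : 0 < k < PI -> 0 < tan (k / 2).
Proof. intros. apply tan_gt_0; lra. Qed.

Lemma sol_sc alpha T k : alpha > 0 -> is_sol alpha T k ->
  sin (INR T * k) * cos (INR T * k) < 0.
Proof.
  intros Ha [Hk [Hc He]].
  pose proof (tan_half_pos k Hk).
  assert (tan (INR T * k) < 0) by (rewrite <- He; nra).
  unfold tan in H0.
  replace (sin (INR T * k) * cos (INR T * k)) with
    (sin (INR T * k) / cos (INR T * k) * (cos (INR T * k))^2) by (field; auto).
  assert (0 < cos (INR T * k) ^ 2) by (simpl; rewrite Rmult_1_r; apply Rsqr_pos_lt; auto).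
  nra.
Qed.

Lemma sol_sin2 alpha T k : alpha > 0 -> is_sol alpha T k ->
  sin (INR (2 * T) * k) < 0.
Proof.
  intros Ha Hs. pose proof (sol_sc alpha T k Ha Hs).
  rewrite mult_INR. replace (INR 2) with 2 by (simpl; ring).
  rewrite Rmult_assoc, sin_2a. lra.
Qed.

Lemma sol_unique alpha T k k' m : alpha > 0 -> (0 < T)%nat ->
  is_sol alpha T k -> is_sol alpha T k' -> k < k' ->
  INR m * PI < INR T * k < (INR m + 1) * PI ->
  INR m * PI < INR T * k' < (INR m + 1) * PI -> False.
Proof.
  intros Ha HT Hs Hs' Hkk Hm Hm'.
  pose proof (sol_sc _ _ _ Ha Hs) as A. pose proof (sol_sc _ _ _ Ha Hs') as B.
  pose proof (sin_same_sign m _ _ Hm Hm') as C.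
  assert (D : cos (INR T * k) * cos (INR T * k') > 0).
  { destruct (Rle_or_lt (cos (INR T * k) * cos (INR T * k')) 0) as [D|D]; [|lra].
    exfalso. nra. }
  assert (HTp : 0 < INR T) by (apply lt_0_INR; auto).
  assert (tan (INR T * k) < tan (INR T * k')) by (apply tan_lt; nra).
  destruct Hs as [Hk [_ He]]. destruct Hs' as [Hk' [_ He']].
  assert (tan (k/2) < tan (k'/2)).
  { apply tan_lt; try lra. assert (0 < cos (k/2)) by (apply cos_gt_0; lra).
    assert (0 < cos (k'/2)) by (apply cos_gt_0; lra). nra. }
  nra.
Qed.

Lemma sin_ge_lb T k : (4 <= T)%nat -> PI / INR T <= k <= PI - PI / INR T ->
  3 / (2 * INR T) <= sin k.
Proof.
  intros HT Hk.
  assert (HT4 : 4 <= INR T) by (apply le_INR in HT; simpl in HT; lra).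
  pose proof PI2_3_2. pose proof PI_4.
  set (u := PI / INR T).
  assert (Hu : 0 < u <= 1).
  { unfold u. split. apply Rdiv_lt_0_compat; lra.
    apply (Rmult_le_reg_r (INR T)); [lra|]. unfold Rdiv. rewrite Rmult_assoc, Rinv_l; lra. }
  assert (HuT : u * INR T = PI) by (unfold u; field; lra).
  assert (Hsu : 3 / (2 * INR T) <= sin u).
  { destruct (SIN u) as [L _]; try lra. rewrite sin_lb_eq in L.
    assert (E3 : 3 / (2 * INR T) = 3 * u / (2 * PI)) by (rewrite <- HuT; field; lra).
    assert (0 <= u^5/120 - u^7/5040).
    { assert (0 < u^5) by (apply pow_lt; lra).
      assert (u^7 <= u^5). { replace (u^7) with (u^5 * (u*u)) by ring.
        assert (u*u <= 1) by nra.
        pose proof (Rmult_le_compat_l (u^5) _ _ (Rlt_le _ _ H1) H2). lra. } lra. }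
    rewrite E3. apply Rle_trans with (u - u^3/6); [|lra].
    apply (Rmult_le_reg_r (2*PI)); [lra|].
    replace (3 * u / (2 * PI) * (2 * PI)) with (3*u) by (field; lra).
    assert (u^3 <= u). { replace (u^3) with (u * (u*u)) by ring.
      assert (Huu : u*u <= 1) by nra. pose proof (Rmult_le_compat_l u _ _ (Rlt_le _ _ (proj1 Hu)) Huu). lra. }
    assert (H5 : 5*u/6 <= u - u^3/6) by lra.
    pose proof (Rmult_le_compat_r (2*PI) _ _ ltac:(lra) H5). nra. }
  assert (Hk2 : u <= k <= PI - u) by (unfold u; exact Hk).
  destruct (Rle_or_lt k (PI/2)).
  - eapply Rle_trans; [apply Hsu|]. apply sin_incr_1; lra.
  - rewrite <- sin_PI_x. eapply Rle_trans; [apply Hsu|]. apply sin_incr_1; lra.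
Qed.

Lemma ks_mono alpha T ks : sol_enum alpha T ks ->
  forall i j, (1 <= i)%nat -> (i <= j)%nat -> (j <= T)%nat -> ks i <= ks j.
Proof.
  intros [Hinc _] i j Hi Hij HjT. induction Hij.
  - lra.
  - apply Rle_trans with (ks m). apply IHHij; lia. left. apply Hinc. lia.
Qed.

Theorem lemma13 (alpha : R) (Halpha : alpha = 1/3 \/ alpha = 1/7) :
  exists T0 : nat, (0 < T0)%nat /\
    forall (T : nat) (ks : nat -> R), (T0 < T)%nat -> sol_enum alpha T ks ->
      (forall t, (2 <= t <= T - 1)%nat ->
         Cfun (ks t) T / Cfun (ks t) (2 * T) <= 5/6) /\
      Cfun (ks 1%nat) T / (Cfun (ks 1%nat) (2 * T)) ^ 2 <= 1/96 /\
      Cfun (ks T) T / (Cfun (ks T) (2 * T)) ^ 2 <= 1/96.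
Proof.
  assert (Ha : alpha > 0) by (destruct Halpha; lra).
  exists 48%nat. split; [lia|].
  intros T ks HT Hen.
  assert (HTr : 48 < INR T) by (apply lt_INR in HT; simpl in HT; lra).
  pose proof PI2_3_2. pose proof PI_4.
  pose proof Hen as [Hinc [Hsol Hall]].
  assert (C2 : forall k, is_sol alpha T k -> 2 * INR T < Cfun k (2 * T)).
  { intros k Hk. pose proof (sol_sin2 _ _ _ Ha Hk).
    destruct Hk as [[Hk0 Hk1] _].
    assert (0 < sin k) by (apply sin_gt_0; lra).
    unfold Cfun. assert (E2 : INR (2 * T) = 2 * INR T) by (rewrite mult_INR; simpl; ring).
    assert (sin (INR (2 * T) * k) / sin k < 0).
    { unfold Rdiv. apply Rmult_neg_pos; auto. apply Rinv_0_lt_compat; auto. }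
    lra. }
  assert (C1 : forall k, is_sol alpha T k -> Cfun k T <= 2 * INR T).
  { intros k Hk. destruct Hk as [[Hk0 Hk1] _].
    assert (0 < sin k) by (apply sin_gt_0; lra).
    pose proof (sin_mult_bound T k) as HB. rewrite (Rabs_right (sin k)) in HB by lra.
    assert (Rabs (sin (INR T * k) / sin k) <= INR T).
    { unfold Rdiv. rewrite Rabs_mult, Rabs_inv by lra. rewrite (Rabs_right (sin k)) by lra.
      apply (Rmult_le_reg_r (sin k)); auto. rewrite Rmult_assoc, Rinv_l by lra. lra. }
    unfold Cfun. match goal with H : Rabs ?x <= INR T |- _ => pose proof (Rle_abs (-x)) as HH; rewrite Rabs_Ropp in HH end. lra. }
  assert (P2 : forall k, is_sol alpha T k ->
             Cfun k T / (Cfun k (2 * T)) ^ 2 <= 1/96).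
  { intros k Hk. pose proof (C1 k Hk). pose proof (C2 k Hk).
    set (a := Cfun k T) in *. set (b := Cfun k (2 * T)) in *.
    assert (0 < b^2) by nra.
    apply (Rmult_le_reg_r (b^2)); auto. unfold Rdiv. rewrite Rmult_assoc, Rinv_l by lra.
    nra. }
  split; [|split; [apply P2, Hsol; lia | apply P2, Hsol; lia]].
  intros t Ht.
  destruct T as [|n]; [lia|].
  assert (Hsn : (S n - 1 = n)%nat) by lia. rewrite Hsn in Ht.
  rewrite S_INR in *.
  assert (L : PI / (INR n + 1) <= ks 2%nat).
  { destruct (Rle_or_lt (PI / (INR n + 1)) (ks 2%nat)) as [?|Hc]; auto. exfalso.
    assert (s1 := Hsol 1%nat ltac:(lia)). assert (s2 := Hsol 2%nat ltac:(lia)).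
    assert (h12 := Hinc 1%nat ltac:(lia)).
    apply (sol_unique alpha (S n) (ks 1%nat) (ks 2%nat) 0 Ha ltac:(lia) s1 s2 h12);
      rewrite S_INR; change (INR 0) with 0;
      destruct s1 as [[? ?] _]; destruct s2 as [[? ?] _].
    - split; [nra|].
      replace ((0+1) * PI) with ((INR n + 1) * (PI / (INR n + 1))) by (field; lra).
      apply Rmult_lt_compat_l; lra.
    - split; [nra|].
      replace ((0+1) * PI) with ((INR n + 1) * (PI / (INR n + 1))) by (field; lra).
      apply Rmult_lt_compat_l; lra. }
  assert (U : ks n <= PI - PI / (INR n + 1)).
  { destruct (Rle_or_lt (ks n) (PI - PI / (INR n + 1))) as [?|Hc]; auto. exfalso.
    assert (s1 := Hsol n ltac:(lia)). assert (s2 := Hsol (S n) ltac:(lia)).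
    assert (h12 := Hinc n ltac:(lia)).
    apply (sol_unique alpha (S n) (ks n) (ks (S n)) n Ha ltac:(lia) s1 s2 h12);
      rewrite S_INR;
      destruct s1 as [[? ?] _]; destruct s2 as [[? ?] _].
    - split.
      + replace (INR n * PI) with ((INR n + 1) * (PI - PI / (INR n + 1))) by (field; lra). nra.
      + nra.
    - split.
      + replace (INR n * PI) with ((INR n + 1) * (PI - PI / (INR n + 1))) by (field; lra). nra.
      + nra. }
  assert (Hk : PI / (INR n + 1) <= ks t <= PI - PI / (INR n + 1)).
  { split.
    - apply Rle_trans with (ks 2%nat); auto. apply (ks_mono _ _ _ Hen); lia.
    - apply Rle_trans with (ks n); auto. apply (ks_mono _ _ _ Hen); lia. }
  assert (Hs := sin_ge_lb (S n) (ks t) ltac:(lia) ltac:(rewrite S_INR; auto)).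
  rewrite S_INR in Hs.
  assert (st := Hsol t ltac:(lia)).
  pose proof (C2 _ st) as Hb.
  assert (Ha1 : Cfun (ks t) (S n) <= 5/3 * (INR n + 1)).
  { destruct st as [[Hk0 Hk1] _]. assert (0 < sin (ks t)) by (apply sin_gt_0; lra).
    unfold Cfun. rewrite S_INR.
    assert (- (sin ((INR n + 1) * ks t) / sin (ks t)) <= 1 / sin (ks t)).
    { unfold Rdiv. pose proof (SIN_bound ((INR n + 1) * ks t)).
      assert (0 < / sin (ks t)) by (apply Rinv_0_lt_compat; lra). nra. }
    assert (1 / sin (ks t) <= 2/3 * (INR n + 1)).
    { apply (Rmult_le_reg_r (sin (ks t))); auto. unfold Rdiv.
      rewrite Rmult_assoc, Rinv_l by lra.
      apply (Rmult_le_compat_l (2/3 * (INR n + 1))) in Hs; [|lra].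
      replace (2 / 3 * (INR n + 1) * (3 / (2 * (INR n + 1)))) with 1 in Hs by (field; lra).
      lra. }
    lra. }
  set (a := Cfun (ks t) (S n)) in *. set (b := Cfun (ks t) (2 * S n)) in *.
  apply (Rmult_le_reg_r b); [lra|]. unfold Rdiv. rewrite Rmult_assoc, Rinv_l by lra.
  lra.
Qed.
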